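(* For every $m\geq0$ the vector $c_{2m+1}\cdot v$ is a scalar multiple $\gamma_m v$ of $v$, and as formal power series in $z$, $$\sum_{m=0}^\infty \gamma_m\, z^{m}=\frac{1}{z}\left(1-\prod_{i=1}^N\frac{1-z\,\lambda_i(\lambda_i+1)}{1-z\,\lambda_i(\lambda_i-1)}\right).$$ Equivalently, $\sum_{m\ge0}\gamma_m u^{-2m-1}=u\Big(1-\prod_{i=1}^N\frac{u^2-\lambda_i(\lambda_i+1)}{u^2-\lambda_i(\lambda_i-1)}\Big)$ as formal Laurent series in $u^{-1}$.
   Context: Let $N\geq1$, $I=\{-N,\dots,-1,1,\dots,N\}$, and for $k\in I$ put $\bar k=0$ if $k>0$, $\bar k=1$ if $k<0$. The Lie superalgebra $\mathfrak{q}(N)$ over $\mathbb{C}$ is spanned by elements $F_{ij}$ ($i,j\in I$) with $F_{-i,-j}=F_{ij}$ (realized as $F_{ij}=E_{ij}+E_{-i,-j}\in\mathfrak{gl}(N|N)$), $F_{ij}$ of parity $\bar\imath+\bar\jmath\bmod 2$, and supercommutator $$[F_{ij}, F_{kl}] = \delta_{kj} F_{il} - (-1)^{(\bar{\imath}+ \bar{\jmath})(\bar{k} + \bar{l})} \delta_{il} F_{kj} + \delta_{k,-j} F_{-i,l} - (-1)^{(\bar{\imath} + \bar{\jmath})(\bar{k} + \bar{l})} \delta_{-i,l} F_{k,-j}.$$ For $n\geq1$ define $C^{(n)}_{ij}\in U(\mathfrak{q}(N))$ by $$C^{(n)}_{ij} = \sum_{k_1,\ldots,k_{n-1}\in I}F_{ik_1}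 (-1)^{\bar{k}_1} F_{k_1k_2} (-1)^{\bar{k}_2} \cdots F_{k_{n-2}k_{n-1}} (-1)^{\bar{k}_{n-1}} F_{k_{n-1}j}$$ (so $C^{(1)}_{ij}=F_{ij}$), and the Casimir element $c_n=\sum_{i\in I}C^{(n)}_{ii}$. Let $V$ be a representation of $\mathfrak{q}(N)$ and $v\in V$ a vector such that $F_{ij}\cdot v=0$ whenever $|i|<|j|$, and $F_{ii}\cdot v=\lambda_i v$ for $i=1,\dots,N$, where $\lambda_1,\dots,\lambda_N\in\mathbb{C}$. *)

(* Defs.v *)
From HB Require Import structures.
From mathcomp Require Import all_boot all_order all_algebra all_field.
Set Implicit Arguments. Unset Strict Implicit. Unset Printing Implicit Defensive.
Import Order.TTheory GRing.Theory Num.Theory.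
Local Open Scope ring_scope.

(* Index set I = {-N,...,-1,1,...,N}: the pair (k, b) : 'I_N * bool encodes
   the index (k+1) if b = false and -(k+1) if b = true.
   So bar(i) = i.2 and |i| = i.1 + 1. *)
Definition Idx (N : nat) : finType := ('I_N * bool)%type.
Definition negI N (i : Idx N) : Idx N := (i.1, ~~ i.2).
Definition barI N (i : Idx N) : bool := i.2.
Definition absI N (i : Idx N) : nat := (i.1 : nat).+1.
Definition posI N (k : 'I_N) : Idx N := (k, false).

Definition sgnb (b : bool) : algC := (-1) ^+ b.
Definition parF N (i j : Idx N) : bool := barI i (+) barI j.

Section Rep.
Variables (N : nat) (V : lmodType algC) (rho : Idx N -> Idx N -> V -> V).

(* Cop n i j is the action of C^{(n+1)}_{ij}:
   C^{(1)}_{ij} = F_ij,  C^{(n+2)}_{ij} = sum_k F_ik (-1)^{bar k} C^{(n+1)}_{kj}. *)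
Fixpoint Cop (n : nat) (i j : Idx N) : V -> V :=
  match n with
  | 0 => rho i j
  | n'.+1 => fun w => \sum_(k : Idx N) rho i k (sgnb (barI k) *: Cop n' k j w)
  end.

Definition Cact (n : nat) (i j : Idx N) : V -> V := Cop n.-1 i j.

Definition casimir (n : nat) (w : V) : V := \sum_(i : Idx N) Cact n i i w.

(* rho is a representation of the Lie superalgebra q(N) on the super vector
   space V; the Z/2-grading of V is encoded by its parity involution P. *)
Definition is_qN_rep (P : V -> V) : Prop :=
  [/\ (forall i j, linear (rho i j)),
      (forall i j w, rho (negI i) (negI j) w = rho i j w),
      linear P /\ (forall w, P (P w) = w),
      (forall i j w, rho i j (P w) = sgnb (parF i j) *: P (rho i j w)) &
      (forall i j k l w,
        let s := sgnb (parF i j && parF k l) in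
        rho i j (rho k l w) - s *: rho k l (rho i j w) =
          (if k == j then rho i l w else 0)
        - s *: (if i == l then rho k j w else 0)
        + (if k == negI j then rho (negI i) l w else 0)
        - s *: (if negI i == l then rho k (negI j) w else 0))].
End Rep.

Section FPS.
Variable R : fieldType.
Definition fps := nat -> R.
Definition fps_one : fps := fun n => (n == 0)%:R.
Definition fps_sub (f g : fps) : fps := fun n => f n - g n.
Definition fps_mul (f g : fps) : fps :=
  fun n => \sum_(k < n.+1) f k * g (n - k)%N.
Definition fps_1mcz (c : R) : fps :=
  fun n => if n == 0%N then 1 else if n == 1%N then - c else 0.
Fixpoint fps_inv_coefs (f : fps) (n : nat) : seq R :=
  match n with
  | 0 => [:: (f 0%N)^-1]
  | n'.+1 => let s := fps_inv_coefs f n' in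
      rcons s (- (f 0%N)^-1 *
               \sum_(1 <= k < n'.+2) f k * nth 0 s (n'.+1 - k)%N)
  end.
Definition fps_inv (f : fps) : fps := fun n => nth 0 (fps_inv_coefs f n) n.
Definition fps_prod (N : nat) (F : 'I_N -> fps) : fps :=
  foldr fps_mul fps_one [seq F i | i <- enum 'I_N].
(* (1/z) f for a series f with zero constant term *)
Definition fps_divz (f : fps) : fps := fun n => f n.+1.
End FPS.

(* Main.v *)
Require Import Defs.
From HB Require Import structures.
From mathcomp Require Import all_boot all_order all_algebra all_field.
From mathcomp Require Import ring.
Set Implicit Arguments. Unset Strict Implicit. Unset Printing Implicit Defensive.
Import Order.TTheory GRing.Theory Num.Theory.
Local Open Scope ring_scope.


Lemma linB (V : lmodType algC) (f : V -> V) : linear f -> forall x y, f (x - y) = f x - f y.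
Proof. move=> L; exact: (zmod_morphism_linear L). Qed.
Lemma linZ (V : lmodType algC) (f : V -> V) : linear f -> forall a x, f (a *: x) = a *: f x.
Proof. move=> L; exact: (scalable_linear L). Qed.
Lemma lin0 (V : lmodType algC) (f : V -> V) : linear f -> f 0 = 0.
Proof. by move=> L; have := linB L 0 0; rewrite !subrr. Qed.
Lemma linD (V : lmodType algC) (f : V -> V) : linear f -> forall x y, f (x + y) = f x + f y.
Proof.
move=> L x y; have h1 := linB L x (- y); have h2 := linB L 0 y.
rewrite opprK in h1; rewrite h1 sub0r in h2 *; rewrite h2 (lin0 L) sub0r opprK //.
Qed.
Lemma linS (V : lmodType algC) (f : V -> V) (I : finType) (F : I -> V) :
  linear f -> f (\sum_i F i) = \sum_i f (F i).
Proof. move=> L; exact: (big_morph f (linD L) (lin0 L)). Qed.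

Lemma sgnbX b c : sgnb b * sgnb c = sgnb (b (+) c).
Proof. by case: b; case: c; rewrite /sgnb /= ?expr0 ?expr1 ?mulr1 ?mul1r ?mulrNN ?mulr1. Qed.
Lemma sgnb_sq b : sgnb b * sgnb b = 1.
Proof. by rewrite sgnbX addbb. Qed.

Lemma sum_if_eq (V : lmodType algC) (I : finType) (a : I) (F : I -> V) :
  \sum_k (if a == k then F k else 0) = F a.
Proof.
rewrite (bigD1 a) //= eqxx big1 ?addr0 // => k /negbTE.
by rewrite eq_sym => ->.
Qed.
Lemma sum_if_eq' (V : lmodType algC) (I : finType) (a : I) (F : I -> V) :
  \sum_k (if k == a then F k else 0) = F a.
Proof. by under eq_bigr do rewrite eq_sym; exact: sum_if_eq. Qed.

Definition ifz (V : lmodType algC) (c : bool) (x : V) := if c then x else 0.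
Lemma ifz_lin (V : lmodType algC) (f : V -> V) c x : linear f -> f (ifz c x) = ifz c (f x).
Proof. by move=> L; case: c; rewrite /ifz ?lin0. Qed.
Lemma ifzZ (V : lmodType algC) c a (x : V) : ifz c (a *: x) = a *: ifz c x.
Proof. by case: c; rewrite /ifz ?scaler0. Qed.
Lemma sum_ifz (V : lmodType algC) (I : finType) c (F : I -> V) :
  \sum_k ifz c (F k) = ifz c (\sum_k F k).
Proof. by case: c; rewrite /ifz // big1. Qed.
Lemma sum_ifz_eq (V : lmodType algC) (I : finType) (a : I) (F : I -> V) :
  \sum_k ifz (a == k) (F k) = F a.
Proof. exact: sum_if_eq. Qed.
Lemma sum_ifz_eq' (V : lmodType algC) (I : finType) (a : I) (F : I -> V) :
  \sum_k ifz (k == a) (F k) = F a.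
Proof. exact: sum_if_eq'. Qed.

Lemma negIK N : involutive (@negI N).
Proof. by case=> k b; rewrite /negI /= negbK. Qed.
Lemma negI_inj N : injective (@negI N).
Proof. exact: inv_inj (@negIK N). Qed.

Lemma Cop_lin N (V : lmodType algC) (rho : Idx N -> Idx N -> V -> V) :
  (forall i j, linear (rho i j)) -> forall n i j, linear (Cop rho n i j).
Proof.
move=> L; elim=> [|n IH] i j //= a x y.
rewrite scaler_sumr -big_split /=; apply: eq_bigr => k _.
by rewrite IH scalerDr !scalerA mulrC -scalerA L.
Qed.

Lemma Cop_neg N (V : lmodType algC) (rho : Idx N -> Idx N -> V -> V) :
  (forall i j, linear (rho i j)) ->
  (forall i j w, rho (negI i) (negI j) w = rho i j w) ->
  forall n i j w, Cop rho n (negI i) (negI j) w = sgnb (odd n) *: Cop rho n i j w.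
Proof.
move=> L hn; elim=> [|n IH] i j w /=; first by rewrite hn /sgnb expr0 scale1r.
rewrite scaler_sumr (reindex_inj (@negI_inj N)) /=; apply: eq_bigr => k _.
rewrite hn IH; rewrite -[in RHS]linZ // !scalerA; congr (rho _ _ (_ *: _)).
by rewrite /barI /= /sgnb; case: (k.2); case: (odd n); rewrite /= ?expr0 ?expr1 ?mulN1r ?mul1r ?mulr1 ?opprK.
Qed.
Lemma sum_ifzZ_eq (V : lmodType algC) (I : finType) (a : I) (c : I -> algC) (F : I -> V) :
  \sum_k c k *: ifz (a == k) (F k) = c a *: F a.
Proof. by under eq_bigr do rewrite -ifzZ; rewrite sum_ifz_eq. Qed.
Lemma sum_ifzZ_eq' (V : lmodType algC) (I : finType) (a : I) (c : I -> algC) (F : I -> V) :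
  \sum_k c k *: ifz (k == a) (F k) = c a *: F a.
Proof. by under eq_bigr do rewrite -ifzZ; rewrite sum_ifz_eq'. Qed.


Lemma rearr (V : zmodType) (P1 Q1 P2 Q2 U1 V1 U2 V2 : V) :
  (P1 - Q1 + P2 - Q2) + (U1 - V1 + U2 - V2) =
  (U1 - Q1 + U2 - Q2) + ((P1 + P2) - (V1 + V2)).
Proof.
rewrite opprD !addrA.
rewrite -!(addrAC _ U1) -!(addrAC _ P2) -!(addrAC _ U2) -!(addrAC _ (- Q2)) -!(addrAC _ (- Q1)).
rewrite -!(addrAC _ (- V1)) -!(addrAC _ (- V2)) -!(addrAC _ P1).
by rewrite (addrC U1 P1) -!(addrAC _ U1).
Qed.

Lemma sg_key N (a b i : Idx N) :
  sgnb (parF a b && parF i b) * sgnb (barI b) = sgnb (parF a b && parF i a) * sgnb (barI a).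
Proof.
rewrite !sgnbX; congr sgnb.
by rewrite /parF /barI; case: (a.2); case: (b.2); case: (i.2).
Qed.
Lemma parF_neg N (a b : Idx N) : parF (negI a) (negI b) = parF a b.
Proof. by rewrite /parF /barI /=; case: (a.2); case: (b.2). Qed.
Lemma sg_key' N (a b i : Idx N) :
  sgnb (parF a b && parF i (negI b)) * sgnb (barI (negI b)) =
  sgnb (parF a b && parF i (negI a)) * sgnb (barI (negI a)).
Proof. by rewrite -(parF_neg a b) sg_key. Qed.
Lemma sg_three N (a b i k j : Idx N) :
  sgnb (parF a b && parF i k) * sgnb (barI k) * sgnb (parF a b && parF k j) =
  sgnb (parF a b && parF i j) * sgnb (barI k).
Proof.
rewrite !sgnbX; congr sgnb.
by rewrite /parF /barI; case: (a.2); case: (b.2); case: (i.2); case: (k.2); case: (j.2).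
Qed.


Lemma Cop_comm N (V : lmodType algC) (rho : Idx N -> Idx N -> V -> V) :
  (forall i j, linear (rho i j)) ->
  (forall a b i j w, let s := sgnb (parF a b && parF i j) in
     rho a b (rho i j w) - s *: rho i j (rho a b w) =
     ifz (i == b) (rho a j w) - s *: ifz (a == j) (rho i b w)
     + ifz (i == negI b) (rho (negI a) j w) - s *: ifz (negI a == j) (rho i (negI b) w)) ->
  forall n a b i j w, let s := sgnb (parF a b && parF i j) in
     rho a b (Cop rho n i j w) - s *: Cop rho n i j (rho a b w) =
     ifz (i == b) (Cop rho n a j w) - s *: ifz (a == j) (Cop rho n i b w)
     + ifz (i == negI b) (Cop rho n (negI a) j w) - s *: ifz (negI a == j) (Cop rho n i (negI b) w).
Proof.
move=> L hrel; elim=> [|n IH] a b i j w /=; first exact: hrel.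
set sg := sgnb (parF a b && parF i j).
have CL := Cop_lin L.
pose y k := sgnb (barI k) *: Cop rho n k j w.
pose c k := sgnb (parF a b && parF i k) * sgnb (barI k).
pose s1 k := sgnb (parF a b && parF i k).
pose T k := ifz (i == b) (rho a k (y k)) - sg *: ifz (a == j) (rho i k (sgnb (barI k) *: Cop rho n k b w))
   + ifz (i == negI b) (rho (negI a) k (y k)) - sg *: ifz (negI a == j) (rho i k (sgnb (barI k) *: Cop rho n k (negI b) w)).
pose D k := (c k *: ifz (k == b) (rho i k (Cop rho n a j w)) + c k *: ifz (k == negI b) (rho i k (Cop rho n (negI a) j w)))
   - (s1 k *: ifz (a == k) (rho i b (y k)) + s1 k *: ifz (negI a == k) (rho i (negI b) (y k))).
have Hk k : rho a b (rho i k (y k)) - sg *: rho i k (sgnb (barI k) *: Cop rho n k j (rho a b w)) = T k + D k.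
  have h1 := hrel a b i k (y k); have h2 := IH a b k j w.
  move: h1 h2 => /= /eqP h1 /eqP h2; rewrite subr_eq in h1; rewrite subr_eq in h2.
  move/eqP: h1 => ->; move/eqP: h2 => h2.
  rewrite /y (linZ (L a b)) h2.
  rewrite !(linZ (L i k)) (linD (L i k)) (linZ (L i k)) !scalerDr !scalerA !mulrA sg_three addrA addrK.
  rewrite (linB (L i k)) (linD (L i k)) (linB (L i k)) !(linZ (L i k)) !(ifz_lin _ _ (L i k)).
  rewrite !(scalerDr, scalerN) !scalerA ?mulrA sg_three addrC.
  rewrite /T /D (linZ (L i k) (sgnb (barI k)) (Cop rho n k b w)).
  rewrite (linZ (L i k) (sgnb (barI k)) (Cop rho n k (negI b) w)) !ifzZ !scalerA.
  rewrite /c /s1 /y /sg; exact: rearr.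
rewrite (linS _ (L a b)) scaler_sumr -sumrB.
rewrite (eq_bigr _ (fun k _ => Hk k)).
have SD : \sum_k D k = 0.
  rewrite /D sumrB !big_split /= !sum_ifzZ_eq' !sum_ifzZ_eq /y !(linZ (L _ _)) !scalerA.
  by rewrite /c /s1 sg_key sg_key' subrr.
rewrite big_split /= SD addr0 /T !(sumrB, big_split) /= -!scaler_sumr !sum_ifz.
done.
Qed.


Lemma absI_neg N (i : Idx N) : absI (negI i) = absI i.
Proof. by []. Qed.
Lemma negI_neq N (k : Idx N) : (k == negI k) = false.
Proof. by case: k => a b; rewrite /negI /= xpair_eqE eqxx /=; case: b. Qed.
Lemma neq_abs N (i j : Idx N) : (absI i < absI j)%N -> (i == j) = false.
Proof. by move=> h; apply/eqP => E; rewrite E ltnn in h. Qed.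

Lemma Cop_van N (V : lmodType algC) (rho : Idx N -> Idx N -> V -> V)
  (L : forall i j, linear (rho i j))
  (hrel : forall a b i j w, let s := sgnb (parF a b && parF i j) in
     rho a b (rho i j w) - s *: rho i j (rho a b w) =
     ifz (i == b) (rho a j w) - s *: ifz (a == j) (rho i b w)
     + ifz (i == negI b) (rho (negI a) j w) - s *: ifz (negI a == j) (rho i (negI b) w))
  (v : V) (hv0 : forall i j, (absI i < absI j)%N -> rho i j v = 0) :
  forall n i j, (absI i < absI j)%N -> Cop rho n i j v = 0.
Proof.
have CL := Cop_lin L.
elim=> [|n IH] i j hij /=; first exact: hv0.
apply: big1 => k _; case: (ltnP (absI k) (absI j)) => hk.
  by rewrite IH // scaler0 (lin0 (L _ _)).
have hik : (absI i < absI k)%N by apply: leq_trans hk.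
have h := Cop_comm L hrel n i k k j v; cbv zeta in h.
rewrite (hv0 _ _ hik) (lin0 (CL _ _ _)) eqxx (IH i j hij) negI_neq (neq_abs hij) in h.
have E : (negI i == j) = false by apply: neq_abs.
rewrite E in h.
rewrite /ifz !scaler0 !subr0 !addr0 in h.
by rewrite (linZ (L _ _)) h scaler0.
Qed.

Lemma sum_levels N (V : lmodType algC) (F : Idx N -> V) (L : 'I_N) :
  (forall M : 'I_N, (M < L)%N -> F (M, false) = 0 /\ F (M, true) = 0) ->
  \sum_k F k = F (L, false) + F (L, true)
     + \sum_(M : 'I_N | (L < M)%N) (F (M, false) + F (M, true)).
Proof.
move=> h0.
rewrite (eq_bigr (fun p : 'I_N * bool => F (p.1, p.2))); last by case.
rewrite -(pair_bigA _ (fun a b => F (a, b))) /=.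
rewrite (eq_bigr (fun i => F (i, false) + F (i, true))); last first.
  by move=> i _; rewrite big_bool /= addrC.
rewrite (bigD1 L) //=; congr (_ + _).
rewrite (bigID (fun M : 'I_N => (L < M)%N)) /= [X in _ + X]big1 ?addr0.
  apply: eq_bigl => M; case: (boolP (L < M)%N) => h; rewrite ?andbT ?andbF //.
  by apply/eqP => E; rewrite E ltnn in h.
move=> M /andP [hM hLM]; have hML : (M < L)%N.
  by rewrite ltn_neqAle leqNgt hLM andbT; apply: contra hM => /eqP/val_inj ->.
by have [-> ->] := h0 M hML; rewrite addr0.
Qed.

Lemma comm_high N (V : lmodType algC) (rho : Idx N -> Idx N -> V -> V)
  (L : forall i j, linear (rho i j))
  (hrel : forall a b i j w, let s := sgnb (parF a b && parF i j) in
     rho a b (rho i j w) - s *: rho i j (rho a b w) =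
     ifz (i == b) (rho a j w) - s *: ifz (a == j) (rho i b w)
     + ifz (i == negI b) (rho (negI a) j w) - s *: ifz (negI a == j) (rho i (negI b) w))
  (v : V) (hv0 : forall i j, (absI i < absI j)%N -> rho i j v = 0) n i j k :
  (absI i < absI k)%N ->
  rho i k (Cop rho n k j v) = Cop rho n i j v
    - sgnb (parF i k && parF k j) *: ifz (i == j) (Cop rho n k k v)
    - sgnb (parF i k && parF k j) *: ifz (negI i == j) (Cop rho n k (negI k) v).
Proof.
move=> hik; have CL := Cop_lin L.
have h := Cop_comm L hrel n i k k j v; cbv zeta in h.
rewrite (hv0 _ _ hik) (lin0 (CL _ _ _)) eqxx negI_neq /ifz scaler0 subr0 addr0 in h.
by rewrite h.
Qed.

Lemma linN (V : lmodType algC) (f : V -> V) : linear f -> forall x, f (- x) = - f x.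
Proof. by move=> Lf x; rewrite -sub0r (linB Lf) (lin0 Lf) sub0r. Qed.

Lemma negI_neq' N (k : Idx N) : (negI k == k) = false.
Proof. by rewrite eq_sym negI_neq. Qed.

Lemma sub_lem (V : zmodType) (x C D : V) : x - C - (x + D) = - (C + D).
Proof. by rewrite [in LHS]opprD addrACA subrr add0r opprD. Qed.
Lemma sub_lem2 (V : zmodType) (x C D : V) : x - C - (x - D) = D - C.
Proof. by rewrite [in LHS]opprD addrACA subrr add0r opprK addrC. Qed.

Lemma sgn_false : sgnb false = 1. Proof. by rewrite /sgnb expr0. Qed.
Lemma sgn_true : sgnb true = -1. Proof. by rewrite /sgnb expr1. Qed.

Lemma StepX N (V : lmodType algC) (rho : Idx N -> Idx N -> V -> V)
  (L : forall i j, linear (rho i j))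
  (hneg : forall i j w, rho (negI i) (negI j) w = rho i j w)
  (hrel : forall a b i j w, let s := sgnb (parF a b && parF i j) in
     rho a b (rho i j w) - s *: rho i j (rho a b w) =
     ifz (i == b) (rho a j w) - s *: ifz (a == j) (rho i b w)
     + ifz (i == negI b) (rho (negI a) j w) - s *: ifz (negI a == j) (rho i (negI b) w))
  (v : V) (hv0 : forall i j, (absI i < absI j)%N -> rho i j v = 0) n (l : 'I_N) :
  Cop rho n.+1 (l, false) (l, false) v =
    rho (l, false) (l, false) (Cop rho n (l, false) (l, false) v)
    - rho (l, true) (l, false) (Cop rho n (l, true) (l, false) v)
    - (1 + sgnb (odd n)) *: \sum_(M : 'I_N | (l < M)%N) Cop rho n (M, false) (M, false) v.
Proof.
have CL := Cop_lin L.
have hv := Cop_van L hrel hv0.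
rewrite /= (@sum_levels _ _ _ l); last first.
  by move=> M hM; rewrite !hv // ?scaler0 ?(lin0 (L _ _)).
rewrite /barI /= sgn_false sgn_true scale1r scaleN1r (linN (L _ _)).
have -> : rho (l, false) (l, true) (Cop rho n (l, true) (l, false) v) =
          rho (l, true) (l, false) (Cop rho n (l, true) (l, false) v).
  by rewrite -hneg.
congr (_ + _); rewrite scaler_sumr -sumrN; apply: eq_bigr => M hM.
rewrite scale1r scaleN1r (linN (L _ _)).
rewrite !(comm_high L hrel hv0) //= ?ltnS //.
rewrite eqxx negI_neq' /ifz !scaler0 !subr0 /parF /barI /= sgn_false sgn_true !scale1r scaleN1r opprK.
have -> : Cop rho n (M, true) (M, true) v = sgnb (odd n) *: Cop rho n (M, false) (M, false) v.
  by have := Cop_neg L hneg n (M, false) (M, false) v.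
by rewrite scalerDl scale1r sub_lem.
Qed.

Lemma StepY N (V : lmodType algC) (rho : Idx N -> Idx N -> V -> V)
  (L : forall i j, linear (rho i j))
  (hneg : forall i j w, rho (negI i) (negI j) w = rho i j w)
  (hrel : forall a b i j w, let s := sgnb (parF a b && parF i j) in
     rho a b (rho i j w) - s *: rho i j (rho a b w) =
     ifz (i == b) (rho a j w) - s *: ifz (a == j) (rho i b w)
     + ifz (i == negI b) (rho (negI a) j w) - s *: ifz (negI a == j) (rho i (negI b) w))
  (v : V) (hv0 : forall i j, (absI i < absI j)%N -> rho i j v = 0) n (l : 'I_N) :
  Cop rho n.+1 (l, true) (l, false) v =
    rho (l, true) (l, false) (Cop rho n (l, false) (l, false) v)
    - rho (l, false) (l, false) (Cop rho n (l, true) (l, false) v)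
    + (1 - sgnb (odd n)) *: \sum_(M : 'I_N | (l < M)%N) Cop rho n (M, true) (M, false) v.
Proof.
have CL := Cop_lin L.
have hv := Cop_van L hrel hv0.
rewrite /= (@sum_levels _ _ _ l); last first.
  by move=> M hM; rewrite !hv // ?scaler0 ?(lin0 (L _ _)).
rewrite /barI /= sgn_false sgn_true scale1r scaleN1r (linN (L _ _)).
have -> : rho (l, true) (l, true) (Cop rho n (l, true) (l, false) v) =
          rho (l, false) (l, false) (Cop rho n (l, true) (l, false) v).
  by rewrite -hneg.
congr (_ + _); rewrite scaler_sumr; apply: eq_bigr => M hM.
rewrite scale1r scaleN1r (linN (L _ _)).
rewrite !(comm_high L hrel hv0) //= ?ltnS //.
have h1 : ((l, true) == (l, false) :> Idx N) = false by rewrite xpair_eqE eqxx.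
rewrite h1 /negI /= eqxx /ifz !scaler0 !subr0 /parF /barI /= sgn_false !scale1r.
have -> : Cop rho n (M, false) (M, true) v = sgnb (odd n) *: Cop rho n (M, true) (M, false) v.
  by have := Cop_neg L hneg n (M, true) (M, false) v.
by rewrite sub_lem2 scalerBl scale1r.
Qed.


Lemma double_inj (V : lmodType algC) (x y : V) : x + x = y + y -> x = y.
Proof.
move=> h; apply: (@scalerI _ _ (2 : algC)); first by rewrite pnatr_eq0.
by rewrite !scaler_nat !mulr2n.
Qed.

Lemma rho_ee N (V : lmodType algC) (rho : Idx N -> Idx N -> V -> V)
  (L : forall i j, linear (rho i j))
  (hneg : forall i j w, rho (negI i) (negI j) w = rho i j w)
  (hrel : forall a b i j w, let s := sgnb (parF a b && parF i j) in
     rho a b (rho i j w) - s *: rho i j (rho a b w) =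
     ifz (i == b) (rho a j w) - s *: ifz (a == j) (rho i b w)
     + ifz (i == negI b) (rho (negI a) j w) - s *: ifz (negI a == j) (rho i (negI b) w))
  (l : 'I_N) (w : V) :
  rho (l, true) (l, false) (rho (l, true) (l, false) w) = rho (l, false) (l, false) w.
Proof.
have h := hrel (l, true) (l, false) (l, true) (l, false) w; cbv zeta in h.
have h1 : ((l, true) == (l, false) :> Idx N) = false by rewrite xpair_eqE eqxx.
rewrite h1 /parF /barI /negI /= eqxx sgn_true /ifz scaler0 subr0 !scaleN1r opprK in h.
have h2 : rho (l, true) (l, true) w = rho (l, false) (l, false) w.
  by rewrite -hneg.
rewrite eqxx add0r opprK h2 in h.
exact: double_inj.
Qed.

Lemma rho_he N (V : lmodType algC) (rho : Idx N -> Idx N -> V -> V)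
  (L : forall i j, linear (rho i j))
  (hneg : forall i j w, rho (negI i) (negI j) w = rho i j w)
  (hrel : forall a b i j w, let s := sgnb (parF a b && parF i j) in
     rho a b (rho i j w) - s *: rho i j (rho a b w) =
     ifz (i == b) (rho a j w) - s *: ifz (a == j) (rho i b w)
     + ifz (i == negI b) (rho (negI a) j w) - s *: ifz (negI a == j) (rho i (negI b) w))
  (l : 'I_N) (w : V) :
  rho (l, false) (l, false) (rho (l, true) (l, false) w) =
  rho (l, true) (l, false) (rho (l, false) (l, false) w).
Proof.
have h := hrel (l, false) (l, false) (l, true) (l, false) w; cbv zeta in h.
have h1 : ((l, true) == (l, false) :> Idx N) = false by rewrite xpair_eqE eqxx.
rewrite h1 /parF /barI /negI /= eqxx sgn_false /ifz !scale1r subr0 in h.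
rewrite eqxx sub0r addNr in h.
by apply/eqP; rewrite -subr_eq0 h.
Qed.

Fixpoint uu N (lam : 'I_N -> algC) (m : nat) (l : 'I_N) : algC :=
  match m with
  | 0 => 1
  | m'.+1 => (lam l - 1) * (lam l * uu lam m' l)
             - 2 * \sum_(M : 'I_N | (l < M)%N) lam M * uu lam m' M
  end.


Lemma main_rep N (V : lmodType algC) (rho : Idx N -> Idx N -> V -> V)
  (L : forall i j, linear (rho i j))
  (hneg : forall i j w, rho (negI i) (negI j) w = rho i j w)
  (hrel : forall a b i j w, let s := sgnb (parF a b && parF i j) in
     rho a b (rho i j w) - s *: rho i j (rho a b w) =
     ifz (i == b) (rho a j w) - s *: ifz (a == j) (rho i b w)
     + ifz (i == negI b) (rho (negI a) j w) - s *: ifz (negI a == j) (rho i (negI b) w))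
  (v : V) (hv0 : forall i j, (absI i < absI j)%N -> rho i j v = 0)
  (lam : 'I_N -> algC) (hvl : forall k : 'I_N, rho (k, false) (k, false) v = lam k *: v) :
  forall m (l : 'I_N),
  (Cop rho (2 * m) (l, false) (l, false) v = (lam l * uu lam m l) *: v /\
   Cop rho (2 * m) (l, true) (l, false) v = uu lam m l *: rho (l, true) (l, false) v) /\
  (Cop rho (2 * m).+1 (l, false) (l, false) v = uu lam m.+1 l *: v /\
   Cop rho (2 * m).+1 (l, true) (l, false) v = 0).
Proof.
have he := rho_ee L hneg hrel.
have hhe := rho_he L hneg hrel.
have oddE m : odd (2 * m) = false by rewrite mul2n odd_double.
have odd_of_even m : (forall l : 'I_N,
    Cop rho (2 * m) (l, false) (l, false) v = (lam l * uu lam m l) *: v /\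
    Cop rho (2 * m) (l, true) (l, false) v = uu lam m l *: rho (l, true) (l, false) v) ->
    forall l : 'I_N, Cop rho (2 * m).+1 (l, false) (l, false) v = uu lam m.+1 l *: v /\
      Cop rho (2 * m).+1 (l, true) (l, false) v = 0.
  move=> H l; split.
    rewrite (StepX L hneg hrel hv0) oddE sgn_false (H l).1 (H l).2.
    rewrite !(linZ (L _ _)) hvl he hvl.
    under eq_bigr => M _ do rewrite (H M).1.
    rewrite -scaler_suml !scalerA -!scalerBl /=; congr (_ *: v); ring.
  rewrite (StepY L hneg hrel hv0) oddE sgn_false (H l).1 (H l).2.
  rewrite !(linZ (L _ _)) hhe hvl (linZ (L _ _)) !scalerA subrr scale0r addr0.
  by rewrite mulrC subrr.
elim=> [|m IH] l.
  have H0 : forall l : 'I_N,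
    Cop rho (2 * 0) (l, false) (l, false) v = (lam l * uu lam 0 l) *: v /\
    Cop rho (2 * 0) (l, true) (l, false) v = uu lam 0 l *: rho (l, true) (l, false) v.
    by move=> k; rewrite /= hvl mulr1 scale1r.
  by split; [exact: H0 | exact: (odd_of_even 0 H0 l)].
have Hev : forall l : 'I_N,
    Cop rho (2 * m.+1) (l, false) (l, false) v = (lam l * uu lam m.+1 l) *: v /\
    Cop rho (2 * m.+1) (l, true) (l, false) v = uu lam m.+1 l *: rho (l, true) (l, false) v.
  move=> k; have -> : (2 * m.+1 = (2 * m).+1.+1)%N by rewrite mulnS addnC addn2.
  have oddS : odd (2 * m).+1 = true by rewrite /= oddE.
  split.
    rewrite (StepX L hneg hrel hv0) oddS sgn_true subrr scale0r subr0.
    rewrite !((IH _).2).1 !((IH _).2).2 (lin0 (L _ _)) subr0 (linZ (L _ _)) hvl scalerA.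
    by rewrite mulrC.
  rewrite (StepY L hneg hrel hv0) oddS sgn_true.
  rewrite !((IH _).2).1 !((IH _).2).2 (lin0 (L _ _)) subr0 (linZ (L _ _)).
  by rewrite big1 ?scaler0 ?addr0 // => M _; exact: ((IH M).2).2.
by split; [exact: Hev | exact: (odd_of_even m.+1 Hev l)].
Qed.


Lemma inv_coefs_geom (d : algC) n :
  size (fps_inv_coefs (fps_1mcz d) n) = n.+1 /\
  forall i, (i <= n)%N -> nth 0 (fps_inv_coefs (fps_1mcz d) n) i = d ^+ i.
Proof.
elim: n => [|n [IHs IHn]] /=.
  by split=> // i; rewrite leqn0 => /eqP ->; rewrite /fps_1mcz /= invr1 expr0.
rewrite size_rcons IHs; split=> // i hi.
rewrite nth_rcons IHs; case: ltnP => hin; first by rewrite IHn.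
have -> : i = n.+1 by apply/eqP; rewrite eqn_leq hi hin.
rewrite eqxx /fps_1mcz /= invr1.
rewrite big_ltn // /= subSS subn0 IHn //.
rewrite big_nat_cond big1 ?addr0; last first.
  by move=> k /andP [/andP [hk _] _]; case: k hk => [|[|k]] //= _; rewrite mul0r.
by rewrite exprS; ring.
Qed.

Lemma inv_geom (d : algC) m : fps_inv (fps_1mcz d) m = d ^+ m.
Proof. by rewrite /fps_inv (proj2 (inv_coefs_geom d m)). Qed.

Definition fgen (c d : algC) (n : nat) : algC :=
  if n is m.+1 then d ^+ m.+1 - c * d ^+ m else 1.

Lemma f_explicit (c d : algC) n :
  fps_mul (fps_1mcz c) (fps_inv (fps_1mcz d)) n = fgen c d n.
Proof.
rewrite /fps_mul; case: n => [|n].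
  by rewrite big_ord_recl big_ord0 inv_geom /fps_1mcz /= expr0 mulr1 addr0.
rewrite big_ord_recl big_ord_recl big1 ?addr0; last first.
  by move=> i _; rewrite /fps_1mcz /= mul0r.
rewrite !inv_geom /fps_1mcz /= subn0 subSS subn0 /fgen; ring.
Qed.

Lemma fgenS (c d : algC) k : fgen c d k.+1 = d * fgen c d k - (k == 0)%:R * c.
Proof. case: k => [|k]; rewrite /fgen /= ?expr0 ?mulr1 ?exprS. all: ring. Qed.


Lemma conv_unique (c d : algC) (Q Q' : nat -> algC) :
  Q 0%N = Q' 0%N ->
  (forall n, Q n.+1 - d * Q n = Q' n.+1 - c * Q' n) ->
  forall n, fps_mul (fps_mul (fps_1mcz c) (fps_inv (fps_1mcz d))) Q' n = Q n.
Proof.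
move=> h0 hS.
have E n : fps_mul (fps_mul (fps_1mcz c) (fps_inv (fps_1mcz d))) Q' n =
           \sum_(k < n.+1) fgen c d k * Q' (n - k)%N.
  by apply: eq_bigr => k _; rewrite f_explicit.
elim=> [|n IH]; first by rewrite E big_ord1 /= mul1r h0.
rewrite E big_ord_recl (_ : fgen c d 0 = 1) // mul1r subn0.
under eq_bigr => k _ do rewrite lift0 subSS fgenS mulrBl -mulrA.
rewrite sumrB -mulr_sumr -E IH big_ord_recl subn0 mul1r big1; last first.
  by move=> k _; rewrite lift0 /= mulr0n !mul0r.
rewrite addr0.
have := hS n; move/eqP; rewrite subr_eq => /eqP ->.
by ring.
Qed.


Definition Sk N (lam : 'I_N -> algC) (k m : nat) : algC :=
  \sum_(i : 'I_N | (k <= i)%N) lam i * uu lam m i.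
Definition Qf N (lam : 'I_N -> algC) (k n : nat) : algC :=
  (n == 0)%:R - (if n is m.+1 then 2 * Sk lam k m else 0).

Lemma Sk_split N (lam : 'I_N -> algC) (i0 : 'I_N) m :
  Sk lam i0 m = lam i0 * uu lam m i0 + Sk lam i0.+1 m.
Proof.
rewrite /Sk (bigD1 i0) //=; congr (_ + _); apply: eq_bigl => i.
by rewrite ltn_neqAle andbC eq_sym -val_eqE.
Qed.

Lemma prod_drop N (x0 : 'I_N) (lam : 'I_N -> algC) :
  forall d k, (k + d = N)%N -> forall n,
  foldr (@fps_mul algC) (@fps_one algC)
    [seq fps_mul (fps_1mcz (lam i * (lam i + 1))) (fps_inv (fps_1mcz (lam i * (lam i - 1))))
    | i <- drop k (enum 'I_N)] n = Qf lam k n.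
Proof.
elim=> [|d IH] k hk n.
  rewrite addn0 in hk; subst k.
  rewrite drop_oversize ?size_enum_ord //=.
  rewrite /Qf /fps_one; case: n => [|n]; rewrite ?subr0 //.
  by rewrite /Sk big_pred0 ?mulr0 ?subr0 // => i; rewrite leqNgt ltn_ord.
have hkN : (k < N)%N by rewrite -hk -addSnnS leq_addr.
rewrite (drop_nth x0) ?size_enum_ord //=.
set i0 := nth x0 (enum 'I_N) k.
have hi0 : (i0 : nat) = k by rewrite /i0 nth_enum_ord.
apply: conv_unique => [|m].
  by rewrite IH ?addSnnS // /Qf.
rewrite !IH ?addSnnS // /Qf /= -hi0.
case: m => [|m]; rewrite !Sk_split /=.
  set S := Sk lam i0.+1 0; ring.
set S := Sk lam i0.+1 m; set S' := Sk lam i0.+1 m.+1.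
have -> : \sum_(M < N | (i0 < M)%N) lam M * uu lam m M = S by []. ring.
Qed.


Lemma sum_pairs N (V : lmodType algC) (F : Idx N -> V) :
  \sum_k F k = \sum_(M : 'I_N) (F (M, false) + F (M, true)).
Proof.
rewrite (eq_bigr (fun p : 'I_N * bool => F (p.1, p.2))); last by case.
rewrite -(pair_bigA _ (fun a b => F (a, b))) /=.
by apply: eq_bigr => i _; rewrite big_bool /= addrC.
Qed.

Theorem mainTheorem12 (N : nat) (hN : (0 < N)%N) (V : lmodType algC)
  (rho : Idx N -> Idx N -> V -> V) (P : V -> V)
  (hrep : is_qN_rep rho P)
  (lam : 'I_N -> algC) (v : V)
  (hv0 : forall i j : Idx N, (absI i < absI j)%N -> rho i j v = 0)
  (hvl : forall k : 'I_N, rho (posI k) (posI k) v = lam k *: v) :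
  exists gamma : nat -> algC,
    (forall m : nat, casimir rho (2 * m + 1) v = gamma m *: v) /\
    (forall m : nat, gamma m =
       fps_divz (fps_sub (@fps_one algC)
         (fps_prod (fun k : 'I_N =>
            fps_mul (fps_1mcz (lam k * (lam k + 1)))
                    (fps_inv (fps_1mcz (lam k * (lam k - 1))))))) m).
Proof.
case: hrep => hlin hneg _ _ hrel0.
have hrel : forall a b i j w, let s := sgnb (parF a b && parF i j) in
     rho a b (rho i j w) - s *: rho i j (rho a b w) =
     ifz (i == b) (rho a j w) - s *: ifz (a == j) (rho i b w)
     + ifz (i == negI b) (rho (negI a) j w) - s *: ifz (negI a == j) (rho i (negI b) w).
  by move=> a b i j w; rewrite /ifz; exact: hrel0.
have hvl' : forall k : 'I_N, rho (k, false) (k, false) v = lam k *: v by exact: hvl.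
have MR := main_rep hlin hneg hrel hv0 hvl'.
exists (fun m => 2 * \sum_(i : 'I_N) lam i * uu lam m i); split.
  move=> m; rewrite /casimir /Cact addn1 /= sum_pairs mulr_sumr scaler_suml.
  apply: eq_bigr => M _.
  have -> : Cop rho (2 * m) (M, true) (M, true) v = Cop rho (2 * m) (M, false) (M, false) v.
    have := Cop_neg hlin hneg (2 * m) (M, false) (M, false) v.
    by rewrite mul2n odd_double sgn_false scale1r.
  by rewrite ((MR m M).1).1 -[in RHS]scalerA scaler_nat mulr2n.
move=> m; rewrite /fps_divz /fps_sub /fps_prod -(drop0 (enum 'I_N)).
rewrite (prod_drop (Ordinal hN) lam (d:=N) (k:=0)) // /Qf /fps_one /= !sub0r opprK.
by congr (_ * _); apply: eq_bigl => i.
Qed.
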